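(* Let $n>(p+s)^4$ be an integer. For any $j \in \{1,2,\ldots,p-1\}$, the function $t\mapsto R_n(t+j/p)$ on $\mathbb{Z}_p$ belongs to $C^\dagger(\mathbb{Z}_p,\mathbb{Q}_p)$, and \[ v_p\left( \mathcal{L}_1\left( R_n\left( t+\frac{j}{p} \right) \right) \right) \geqslant (p+1+s)(n+1) + s \cdot v_p(n!) -M_0 - 3 - \left\lfloor \frac{\log (n+1)}{\log p} \right\rfloor. \]
   Context: Let $p\geqslant 5$ be a prime and $s$ a positive integer. Write $v_p$ for the $p$-adic valuation and $(\alpha)_k=\alpha(\alpha+1)\cdots(\alpha+k-1)$. Put $N_0=v_p(p-1+s)$ and $M_0=p^{2+N_0}s-1$. For an integer $n>(p+s)^4$ let \[R_n(t)=p^{pn}\, n!^s\, t^{M_0}\,\frac{\prod_{j=1}^{p-1}(t+\frac{j}{p})_n}{(t)_{n+1}^{p-1+s}}\in\mathbb{Q}(t).\] For $\rho>1$, $C^{\mathrm{an}}_\rho(\mathbb{Z}_p,\mathbb{Q}_p)$ is the set of functions $f(x)=\sum_{k\geqslant0}a_kx^k$ on $\mathbb{Z}_p$ with $a_k\in\mathbb{Q}_p$ and $|a_k|_p\rho^k\to0$, and $C^\dagger(\mathbb{Z}_p,\mathbb{Q}_p)=\bigcup_{\rho>1}C^{\mathrm{an}}_\rho(\mathbb{Z}_p,\mathbb{Q}_p)$. The first Bernoulli functional $\mathcal{L}_1:C^\dagger(\mathbb{Z}_p,\mathbb{Q}_p)\to\mathbb{Q}_p$ is $\mathcal{L}_1\left(\sum_{k\geqslant0}a_kt^k\right)=\sum_{k\geqslant0}a_k\frac{B_{k+1}}{k+1}$,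 where $B_m$ are the Bernoulli numbers ($\frac{t}{e^t-1}=\sum_m B_m\frac{t^m}{m!}$). *)

(* Defs.v *)
From HB Require Import structures.
From mathcomp Require Import all_boot all_order all_algebra.
Set Implicit Arguments. Unset Strict Implicit. Unset Printing Implicit Defensive.
Import Order.TTheory GRing.Theory Num.Theory.
Local Open Scope ring_scope.

(* p-adic valuation of a rational number (value 0 at x = 0, never used there) *)
Definition vp (p : nat) (x : rat) : int :=
  (logn p `|numq x|%N)%:Z - (logn p `|denq x|%N)%:Z.

Definition padic_abs (p : nat) (x : rat) : rat :=
  if x == 0 then 0 else (p%:R : rat) ^ (- vp p x).

(* Bernoulli numbers with t/(e^t-1) = sum B_m t^m/m!  (B_1 = -1/2):
   B_0 = 1, sum_{k=0}^{m} C(m+1,k) B_k = 0 for m >= 1. *)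
Fixpoint bern_seq (m : nat) : seq rat :=
  match m with
  | 0 => [:: 1]
  | m'.+1 => let s := bern_seq m' in
      rcons s (- (\sum_(k < m'.+1) ('C(m'.+2, k))%:R * s`_k) / (m'.+2)%:R)
  end.
Definition bernoulli (m : nat) : rat := (bern_seq m)`_m.

Definition N0 (p s : nat) : nat := logn p (p - 1 + s).
Definition M0 (p s : nat) : nat := (p ^ (2 + N0 p s) * s - 1)%N.

(* R_n(t) = Rnum / Rden with
   Rnum = p^(pn) n!^s t^M0 prod_{j=1}^{p-1} (t + j/p)_n,
   Rden = (t)_{n+1}^(p-1+s). *)
Definition Rnum (p s n : nat) : {poly rat} :=
  ((p ^ (p * n) * n`! ^ s)%N%:R)%:P * 'X ^+ (M0 p s) *
  \prod_(1 <= j < p) \prod_(i < n) ('X + ((j%:R / p%:R) + i%:R)%:P).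
Definition Rden (p s n : nat) : {poly rat} :=
  (\prod_(i < n.+1) ('X + (i%:R)%:P)) ^+ (p - 1 + s).

Definition shiftNum (p s n j : nat) : {poly rat} :=
  Rnum p s n \Po ('X + (j%:R / p%:R)%:P).
Definition shiftDen (p s n j : nat) : {poly rat} :=
  Rden p s n \Po ('X + (j%:R / p%:R)%:P).

(* power series sum_k a_k x^k lies in C^dagger(Z_p,Q_p):
   exists rho > 1 with |a_k|_p rho^k -> 0 *)
Definition in_Cdagger (p : nat) (a : nat -> rat) : Prop :=
  exists rho : rat, 1 < rho /\
    forall eps : rat, 0 < eps -> exists K : nat, forall k : nat,
      (K <= k)%N -> padic_abs p (a k) * rho ^+ k < eps.

(* partial sums of L_1(sum a_k t^k) = sum a_k B_{k+1}/(k+1) *)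
Definition L1_partial (a : nat -> rat) (N : nat) : rat :=
  \sum_(k < N) a k * bernoulli k.+1 / (k.+1)%:R.

Definition padic_cauchy (p : nat) (S : nat -> rat) : Prop :=
  forall M : int, exists K : nat, forall m1 m2 : nat,
    (K <= m1)%N -> (K <= m2)%N -> S m1 = S m2 \/ M <= vp p (S m1 - S m2).

Definition lemma6p1_bound (p s n : nat) : int :=
  ((p + 1 + s) * n.+1 + s * logn p n`!)%N%:Z - (M0 p s)%:Z - 3
  - (trunc_log p n.+1)%:Z.

(* Main.v *)
Require Import Defs.
From HB Require Import structures.
From mathcomp Require Import all_boot all_order all_algebra.
From mathcomp Require Import zify ring lra.
Set Implicit Arguments. Unset Strict Implicit. Unset Printing Implicit Defensive.
Import Order.TTheory GRing.Theory Num.Theory.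
Local Open Scope ring_scope.


Section Padic.
Variable p : nat.
Hypothesis pp : prime p.

Definition pint (x : rat) := exists (a : int) (b : nat), ~~ (p %| b)%N /\ x = a%:~R / b%:R.

Lemma p_gt1 : (1 < p)%N. Proof. exact: prime_gt1. Qed.
Lemma p_neq0 : (p%:R : rat) != 0. Proof. by rewrite pnatr_eq0 -lt0n prime_gt0. Qed.

Lemma nd_neq0 (b : nat) : ~~ (p %| b)%N -> (b%:R : rat) != 0.
Proof. by case: b => [|b]; rewrite ?dvdn0 // pnatr_eq0. Qed.

Lemma pint_int (a : int) : pint a%:~R.
Proof. exists a, 1%N; split; last by rewrite divr1. by rewrite dvdn1 neq_ltn p_gt1 orbT. Qed.

Lemma pint_nat (m : nat) : pint m%:R.
Proof. by have := pint_int m; rewrite -[m%:R]/((Posz m)%:~R). Qed.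

Lemma pint0 : pint 0. Proof. exact: (pint_nat 0). Qed.
Lemma pint1 : pint 1. Proof. exact: (pint_nat 1). Qed.

Lemma pintD x y : pint x -> pint y -> pint (x + y).
Proof.
move=> [a [b [hb ->]]] [c [d [hd ->]]].
exists (a * d%:Z + c * b%:Z), (b * d)%N; split.
  by rewrite Euclid_dvdM // negb_or hb hd.
have b0 := nd_neq0 hb; have d0 := nd_neq0 hd.
rewrite natrM rmorphD !rmorphM /=. field. by rewrite b0 d0.
Qed.

Lemma pintM x y : pint x -> pint y -> pint (x * y).
Proof.
move=> [a [b [hb ->]]] [c [d [hd ->]]].
exists (a * c), (b * d)%N; split.
  by rewrite Euclid_dvdM // negb_or hb hd.
have b0 := nd_neq0 hb; have d0 := nd_neq0 hd.
rewrite natrM !rmorphM /=. field. by rewrite b0 d0.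
Qed.

Lemma pintN x : pint x -> pint (- x).
Proof. move=> hx; rewrite -mulN1r; apply: pintM hx; exact: (pint_int (-1)). Qed.

Lemma pint_invn (b : nat) : ~~ (p %| b)%N -> pint (b%:R)^-1.
Proof. move=> hb; exists 1, b; split => //; by rewrite mul1r. Qed.

Lemma pint_sum (I : Type) (r : seq I) (P : pred I) (F : I -> rat) :
  (forall i, P i -> pint (F i)) -> pint (\sum_(i <- r | P i) F i).
Proof. move=> h; apply: big_ind => //; [exact: pint0 | exact: pintD]. Qed.

Definition vge (M : int) (x : rat) := pint (x / (p%:R ^ M)).

Lemma vge0 M : vge M 0. Proof. by rewrite /vge mul0r; exact: pint0. Qed.

Lemma vgeD M x y : vge M x -> vge M y -> vge M (x + y).
Proof. by rewrite /vge mulrDl; exact: pintD. Qed.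

Lemma vgeN M x : vge M x -> vge M (- x).
Proof. by rewrite /vge mulNr; exact: pintN. Qed.

Lemma vgeB M x y : vge M x -> vge M y -> vge M (x - y).
Proof. by move=> hx hy; apply: vgeD hx (vgeN hy). Qed.

Lemma vge_sum (I : Type) (r : seq I) (P : pred I) (F : I -> rat) M :
  (forall i, P i -> vge M (F i)) -> vge M (\sum_(i <- r | P i) F i).
Proof. move=> h; apply: big_ind => //; [exact: vge0 | exact: vgeD]. Qed.

Lemma vgeM M N x y : vge M x -> vge N y -> vge (M + N) (x * y).
Proof.
rewrite /vge expfzDr ?p_neq0 // => hx hy.
have -> : x * y / (p%:R ^ M * p%:R ^ N) = (x / p%:R ^ M) * (y / p%:R ^ N).
  by rewrite invfM; ring.
exact: pintM.
Qed.

Lemma pint_pexp (m : nat) : pint (p%:R ^ (Posz m)).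
Proof. by rewrite -exprnP -natrX; exact: pint_nat. Qed.

Lemma vge_le M N x : N <= M -> vge M x -> vge N x.
Proof.
rewrite /vge => hNM hx.
have -> : x / p%:R ^ N = (x / p%:R ^ M) * p%:R ^ (M - N).
  rewrite expfzDr ?p_neq0 // -invr_expz. field.
  by rewrite !expfz_neq0 ?p_neq0.
apply: pintM hx _.
have: 0 <= M - N by rewrite subr_ge0.
case: (M - N) => // m _; exact: pint_pexp.
Qed.

Lemma vge_pint x : vge 0 x <-> pint x.
Proof. by rewrite /vge expr0z divr1. Qed.

Lemma vge_pexpz (M : int) : vge M (p%:R ^ M).
Proof. by rewrite /vge divff ?expfz_neq0 ?p_neq0 //; exact: pint1. Qed.

Lemma vge_nat m : (0 < m)%N -> vge (logn p m) m%:R.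
Proof.
move=> m0; case: (pfactor_coprime pp m0) => u hu hm.
rewrite /vge.
have -> : (m%:R : rat) / p%:R ^ (logn p m) = u%:R.
  move: hm; set e := logn p m => hm.
  by rewrite hm natrM natrX exprnP mulfK // expfz_neq0 // p_neq0.
exact: pint_nat.
Qed.

Lemma vge_invnat m : (0 < m)%N -> vge (- (logn p m)%:Z) (m%:R)^-1.
Proof.
move=> m0; case: (pfactor_coprime pp m0) => u hu hm.
rewrite /vge.
have hu' : ~~ (p %| u)%N.
  by rewrite -(@prime_coprime p u) // hu.  
have -> : (m%:R : rat)^-1 / p%:R ^ (- (logn p m)%:Z) = u%:R^-1.
  move: hm; set e := logn p m => hm.
  rewrite -invr_expz invrK hm natrM natrX exprnP.
  by rewrite invfM -mulrA mulVf ?mulr1 // expfz_neq0 // p_neq0.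
exact: pint_invn hu'.
Qed.


Lemma vp_frac (a : int) (b : nat) : a != 0 -> (0 < b)%N ->
  vp p (a%:~R / b%:R) = (logn p `|a|%N)%:Z - (logn p b)%:Z.
Proof.
move=> a0 b0; set x := a%:~R / b%:R.
have hx : x = (numq x)%:~R / (denq x)%:~R by rewrite divq_num_den.
have x0 : x != 0.
  by rewrite /x mulf_neq0 // ?intr_eq0 // invr_eq0 pnatr_eq0 -lt0n.
have hq : numq x * b%:Z = a * denq x.
  apply: (@intr_inj rat); rewrite !rmorphM /=.
  change ((numq x)%:~R * (b%:R : rat) = a%:~R * (denq x)%:~R).
  apply/eqP; rewrite -eqr_div ?intr_eq0 ?denq_neq0 //; last by rewrite pnatr_eq0 -lt0n.
  by rewrite -hx.
have hn : numq x != 0 by rewrite numq_eq0.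
have ha := congr1 (fun z : int => logn p `|z|%N) hq; simpl in ha.
rewrite !abszM !lognM in ha; try by rewrite absz_gt0 ?denq_neq0.
rewrite /vp; move: ha; have -> : (`|Posz b| = b)%N by [].
move=> ha; lia. all: by [].
Qed.

Lemma vge_vp M x : vge M x -> x != 0 -> M <= vp p x.
Proof.
move=> [a [b [hb hx]]] x0.
have b0 : (0 < b)%N by case: b hb {hx} => //; rewrite dvdn0.
have bc : logn p b = 0%N by rewrite logn_coprime // prime_coprime.
have a0 : a != 0.
  apply: contraNneq x0 => a0; move: hx; rewrite a0 mul0r => /eqP.
  by rewrite mulf_eq0 invr_eq0 expfz_eq0 (negbTE p_neq0) andbF orbF.
have hxe : x = a%:~R / b%:R * p%:R ^ M.
  by rewrite -hx mulfVK // expfz_neq0 // p_neq0.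
clear hx; case: M hxe => m hxe.
- have -> : x = (a * (p ^ m)%N%:Z)%:~R / b%:R.
    by rewrite hxe rmorphM /= -[((p^m)%N%:Z)%:~R]/((p^m)%N%:R) natrX exprnP; ring.
  rewrite vp_frac //; last by rewrite mulf_neq0 // -lt0n expn_gt0 prime_gt0.
  rewrite abszM lognM; [|by rewrite absz_gt0|by rewrite /= expn_gt0 prime_gt0].
  rewrite (_ : `|(p ^ m)%N%:Z|%N = (p^m)%N) // pfactorK // bc; lia.
- have -> : x = a%:~R / (b * p ^ m.+1)%N%:R.
    rewrite hxe NegzE -invr_expz natrM natrX exprnP; field.
    by rewrite expfz_neq0 ?p_neq0 // (nd_neq0 hb).
  rewrite vp_frac //; last by rewrite muln_gt0 b0 expn_gt0 prime_gt0.
  rewrite lognM //; last by rewrite expn_gt0 prime_gt0.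
  rewrite (pfactorK m.+1 pp) bc NegzE; lia.
Qed.

Lemma vge_abs M x : vge M x -> padic_abs p x <= (p%:R : rat) ^ (- M).
Proof.
move=> hx; rewrite /padic_abs; case: eqP => [_|/eqP x0].
  by rewrite exprz_ge0 // ler0n.
rewrite ler_weXz2l ?ler1n ?prime_gt0 // lerN2; exact: vge_vp.
Qed.

End Padic.


Lemma bin_swap n k l : ('C(n,k) * 'C(n-k,l) = 'C(n,l) * 'C(n-l,k))%N.
Proof.
case: (leqP (k + l) n) => hkl.
  have hk : (k <= n)%N by lia.
  have hl : (l <= n)%N by lia.
  have h1 := bin_fact hk. have h3 := bin_fact hl.
  have h2 : ('C(n-k,l) * (l`! * (n-k-l)`!) = (n-k)`!)%N by apply: bin_fact; lia.
  have h4 : ('C(n-l,k) * (k`! * (n-l-k)`!) = (n-l)`!)%N by apply: bin_fact; lia.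
  have e : (n - l - k = n - k - l)%N by lia.
  rewrite e in h4.
  have X0 : (0 < k`! * l`! * (n-k-l)`!)%N by rewrite !muln_gt0 !fact_gt0.
  apply/eqP; rewrite -(eqn_pmul2r X0); apply/eqP.
  transitivity ('C(n,k) * (k`! * ('C(n-k,l) * (l`! * (n-k-l)`!))))%N; first by ring.
  rewrite h2 h1.
  transitivity ('C(n,l) * (l`! * ('C(n-l,k) * (k`! * (n-k-l)`!))))%N; last by ring.
  by rewrite h4 h3.
case: (leqP k n) => hk.
  rewrite (@bin_small (n-k) l); last by lia.
  case: (leqP l n) => hl.
    rewrite (@bin_small (n-l) k) ?muln0 //; lia.
  by rewrite muln0 (@bin_small n l).
rewrite (@bin_small n k) // (@bin_small (n-l) k) ?muln0 //; lia.
Qed.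

Lemma size_bern_seq m : size (bern_seq m) = m.+1.
Proof. by elim: m => //= m IH; rewrite size_rcons IH. Qed.

Lemma bern_seq_nth m k : (k <= m)%N -> (bern_seq m)`_k = bernoulli k.
Proof.
elim: m => [|m IH]; first by rewrite leqn0 => /eqP ->.
rewrite leq_eqVlt => /orP [/eqP ->|hk] //.
by rewrite /= nth_rcons size_bern_seq hk IH.
Qed.

Lemma bernoulliS m : bernoulli m.+1 =
  - (\sum_(k < m.+1) ('C(m.+2, k))%:R * bernoulli k) / (m.+2)%:R.
Proof.
rewrite {1}/bernoulli /= nth_rcons size_bern_seq ltnn eqxx.
congr (- _ / _); apply: eq_bigr => i _; rewrite bern_seq_nth //; by rewrite -ltnS.
Qed.

Lemma bern0 : bernoulli 0 = 1. Proof. by []. Qed.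
Lemma bern1 : bernoulli 1 = - (1/2). 
Proof. by rewrite bernoulliS big_ord1 bern0 bin0 mul1r. Qed.

Lemma bern_T M : \sum_(k < M.+1) ('C(M, k))%:R * bernoulli k =
  bernoulli M + (M == 1%N)%:R.
Proof.
case: M => [|[|m]].
- by rewrite big_ord1 bin0 mul1r addr0.
- by rewrite !big_ord_recr big_ord0 /= bern0 bern1 add0r bin0 binn; field.
rewrite big_ord_recr /= binn mul1r addr0.
rewrite big_ord_recr /= binSn bernoulliS.
set S := \sum_(_ < _) _. 
have h : (m.+2)%:R != 0 :> rat by rewrite pnatr_eq0.
by rewrite mulrCA mulfV // mulr1 addrN add0r.
Qed.

Lemma sum_widen_bin M n (F : nat -> rat) : (M <= n)%N ->
  \sum_(k < n.+1) ('C(M, k))%:R * F k = \sum_(k < M.+1) ('C(M, k))%:R * F k.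
Proof.
move=> hMn; rewrite [RHS](@big_ord_widen _ _ _ M.+1 n.+1 (fun k => ('C(M,k))%:R * F k)) //.
rewrite [RHS]big_mkcond /=; apply: eq_bigr => i _.
case: ifP => // hi; rewrite bin_small ?mul0r //; lia.
Qed.

Lemma exp_wide m n (x : rat) : (m <= n)%N ->
  (x + 1) ^+ m = \sum_(i < n.+1) ('C(m, i))%:R * x ^+ i.
Proof.
move=> hmn; rewrite exprD1n (sum_widen_bin (fun i => x ^+ i) hmn).
by apply: eq_bigr => i _; rewrite mulr_natl.
Qed.

Definition Bpoly n (x : rat) := \sum_(k < n.+1) ('C(n, k))%:R * bernoulli k * x ^+ (n - k).

Lemma Bpoly_step n x : (0 < n)%N -> Bpoly n (x + 1) = Bpoly n x + n%:R * x ^+ n.-1.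
Proof.
move=> n0; rewrite /Bpoly.
transitivity (\sum_(l < n.+1) ('C(n, l))%:R * x ^+ l *
    \sum_(k < n.+1) ('C(n - l, k))%:R * bernoulli k).
  transitivity (\sum_(k < n.+1) \sum_(l < n.+1)
     ('C(n, k) * 'C(n - k, l))%:R * bernoulli k * x ^+ l).
    apply: eq_bigr => k _; rewrite (@exp_wide (n - k) n) ?leq_subr // mulr_sumr.
    by apply: eq_bigr => l _; rewrite natrM; ring.
  rewrite exchange_big /=; apply: eq_bigr => l _; rewrite mulr_sumr.
  by apply: eq_bigr => k _; rewrite bin_swap natrM; ring.
transitivity (\sum_(l < n.+1) ('C(n, l))%:R * x ^+ l * (bernoulli (n - l) + ((n - l == 1)%N)%:R)).
  apply: eq_bigr => l _; congr (_ * _).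
  by rewrite (sum_widen_bin (fun k => bernoulli k)) ?leq_subr // bern_T.
rewrite (eq_bigr (fun l : 'I_n.+1 => ('C(n, l))%:R * x ^+ l * bernoulli (n - l) +
    ('C(n, l))%:R * x ^+ l * ((n - l == 1)%N)%:R)); last by move=> l _; rewrite mulrDr.
rewrite big_split /=; congr (_ + _).
  rewrite (reindex_inj rev_ord_inj) /=; apply: eq_bigr => k _.
  have hk : (k <= n)%N by rewrite -ltnS.
  rewrite subSS subKn // bin_sub //; ring.
case: n n0 => // n _ /=.
rewrite big_ord_recr /= subnn /= mulr0 addr0 big_ord_recr /=.
rewrite big1 ?add0r; last first.
  move=> i _; have -> : (n.+1 - i == 1)%N = false by have := ltn_ord i; lia.
  by rewrite mulr0.
rewrite subSn // subnn /= binSn; ring.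
Qed.

Lemma Bpoly0 n : Bpoly n 0 = bernoulli n.
Proof.
rewrite /Bpoly big_ord_recr /= subnn expr0 mulr1 binn mul1r big1 ?add0r //.
move=> i _; rewrite expr0n; have -> : (n - i == 0)%N = false by have := ltn_ord i; lia.
by rewrite mulr0.
Qed.

Lemma psum_formula m N : (m.+1)%:R * \sum_(x < N) (x%:R : rat) ^+ m =
  Bpoly m.+1 N%:R - bernoulli m.+1.
Proof.
elim: N => [|N IH]; first by rewrite big_ord0 mulr0 Bpoly0 subrr.
rewrite big_ord_recr /= mulrDr IH -(natr1 N) Bpoly_step //=; ring.
Qed.


Lemma logn_lt p d : prime p -> (0 < d)%N -> (logn p d < d)%N.
Proof.
move=> pp d0; apply: (@leq_trans (p ^ logn p d)).
  by apply: ltn_expl; exact: prime_gt1.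
by apply: dvdn_leq => //; exact: pfactor_dvdnn.
Qed.

Lemma bern_pint p : prime p -> forall m, pint p (p%:R * bernoulli m).
Proof.
move=> pp; elim/ltn_ind => m IH.
set S := \sum_(x < p) (x%:R : rat) ^+ m.
have hS := psum_formula m p.
rewrite /Bpoly big_ord_recr /= subnn expr0 binn mul1r mulr1 addrK in hS.
rewrite big_ord_recr /= binSn subSn // subnn expr1 in hS.
have key : forall k : nat, (k <= m)%N -> ('C(m.+1, k))%:R * bernoulli k * (p%:R : rat) ^+ (m.+1 - k) =
   (m.+1)%:R * (('C(m, k))%:R * ((p%:R) ^+ (m - k) / (m.+1 - k)%:R) * (p%:R * bernoulli k)).
  move=> k hk.
  have hb := mul_bin_down m.+1 k; simpl in hb.
  have hb' : (m.+1)%:R * ('C(m, k))%:R = (m.+1 - k)%:R * ('C(m.+1, k))%:R :> rat.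
    by rewrite -!natrM hb.
  have h0 : (m.+1 - k)%:R != 0 :> rat by rewrite pnatr_eq0; lia.
  have hC : ('C(m.+1, k))%:R = (m.+1)%:R * ('C(m, k))%:R / (m.+1 - k)%:R :> rat.
    by rewrite hb' mulrC mulKf.
  have -> : (p%:R : rat) ^+ (m.+1 - k) = p%:R * p%:R ^+ (m - k) by rewrite subSn // exprS.
  rewrite hC; ring.
rewrite (eq_bigr _ (fun (k : 'I_m) _ => key k (ltnW (ltn_ord k)))) -mulr_sumr in hS.
rewrite -mulrA -mulrDr in hS.
have hm : (m.+1)%:R != 0 :> rat by rewrite pnatr_eq0.
move/(mulfI hm): hS => hS.
have -> : p%:R * bernoulli m = S - \sum_(i < m) ('C(m, i))%:R *
     (p%:R ^+ (m - i) / (m.+1 - i)%:R) * (p%:R * bernoulli i).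
  rewrite /S hS; ring.
apply: (pintD pp); first by rewrite /S; apply: (pint_sum pp) => i _; rewrite -natrX; exact: (pint_nat pp).
apply: (pintN pp); apply: (pint_sum pp) => i _.
apply: (pintM pp); last exact: IH.
apply: (pintM pp); first exact: (pint_nat pp).
apply/(vge_pint p).
have hle : (0:int) <= (m - i)%N%:Z + - (logn p (m.+1 - i))%:Z.
  have := @logn_lt p (m.+1 - i) pp; have := ltn_ord i; lia.
apply: (vge_le pp hle).
apply: (vgeM pp); first by rewrite exprnP; exact: (vge_pexpz pp).
apply: (vge_invnat pp); have := ltn_ord i; lia.
Qed.

Lemma bern_vge p : prime p -> forall m, vge p (-1) (bernoulli m).
Proof.
move=> pp m; rewrite /vge.
have -> : (p%:R : rat) ^ (-1) = (p%:R)^-1 by rewrite -invr_expz expr1z.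
rewrite invrK mulrC; exact: bern_pint.
Qed.


Section Coef.
Variable p : nat.
Hypothesis pp : prime p.

Definition cb (P : {poly rat}) (f : nat -> int) := forall k, vge p (f k) P`_k.

Lemma cb_mulX P f g r d : cb P f -> vge p d r ->
  (forall k, g k <= f k + d) -> (forall k, g k.+1 <= f k) ->
  cb (P * ('X + r%:P)) g.
Proof.
move=> hP hr h1 h2 k; rewrite mulrDr coefD coefMX coefMC.
case: k => [|k] /=.
  rewrite add0r; apply: (vge_le pp (h1 0%N)); exact: (vgeM pp).
apply: (vgeD pp); first exact: (vge_le pp (h2 k)).
apply: (vge_le pp (h1 k.+1)); exact: (vgeM pp).
Qed.

Definition Fb (C : int) (L G : nat) := fun k : nat => C - L%:Z + (k - G)%N%:Z.

Lemma cb_bad P C L G r : cb P (Fb C L G) -> vge p (-1) r ->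
  cb (P * ('X + r%:P)) (Fb C L.+1 G).
Proof. move=> hP hr; apply: (cb_mulX hP hr) => k; rewrite /Fb; lia. Qed.

Lemma cb_good P C L G r : cb P (Fb C L G) -> vge p 0 r ->
  cb (P * ('X + r%:P)) (Fb C L G.+1).
Proof. move=> hP hr; apply: (cb_mulX hP hr) => k; rewrite /Fb; lia. Qed.

Lemma cb_bad_ord P C L G m (r : nat -> rat) : cb P (Fb C L G) ->
  (forall t, (t < m)%N -> vge p (-1) (r t)) ->
  cb (P * \prod_(t < m) ('X + (r t)%:P)) (Fb C (L + m) G).
Proof.
move=> hP hr; elim: m hr => [|m IH] hr.
  by rewrite big_ord0 mulr1 addn0.
rewrite big_ord_recr /= mulrA addnS; apply: cb_bad; last exact: hr.
by apply: IH => t ht; apply: hr; exact: ltnW.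
Qed.

Lemma cb_good_ord P C L G m (r : nat -> rat) : cb P (Fb C L G) ->
  (forall t, (t < m)%N -> vge p 0 (r t)) ->
  cb (P * \prod_(t < m) ('X + (r t)%:P)) (Fb C L (G + m)).
Proof.
move=> hP hr; elim: m hr => [|m IH] hr.
  by rewrite big_ord0 mulr1 addn0.
rewrite big_ord_recr /= mulrA addnS; apply: cb_good; last exact: hr.
by apply: IH => t ht; apply: hr; exact: ltnW.
Qed.

Lemma cb_bad_nat P C L G a b m (r : nat -> nat -> rat) : (a <= b)%N ->
  cb P (Fb C L G) ->
  (forall i t, (a <= i < b)%N -> (t < m)%N -> vge p (-1) (r i t)) ->
  cb (P * \prod_(a <= i < b) \prod_(t < m) ('X + (r i t)%:P)) (Fb C (L + (b - a) * m) G).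
Proof.
move=> hab hP hr; elim: b hab hr => [|b IH] hab hr.
  by rewrite leqn0 in hab; rewrite (eqP hab) big_geq // mulr1 addn0.
case: (ltngtP a b.+1) hab => // [hab|<-] _; last by rewrite big_geq // mulr1 subnn addn0.
rewrite big_nat_recr //= mulrA.
have -> : (L + (b.+1 - a) * m = (L + (b - a) * m) + m)%N.
  by rewrite subSn // mulSn; lia.
apply: cb_bad_ord; first apply: IH => //.
  by move=> i t /andP [h1 h2] ht; apply: hr => //; rewrite h1 /=; exact: ltnW.
by move=> t ht; apply: hr => //; rewrite ltnSn andbT -ltnS.
Qed.

Lemma cb_bad_pow P C L G e r : cb P (Fb C L G) -> vge p (-1) r ->
  cb (P * ('X + r%:P) ^+ e) (Fb C (L + e) G).
Proof.
move=> hP hr; elim: e => [|e IH]; first by rewrite expr0 mulr1 addn0.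
by rewrite exprSr mulrA addnS; apply: cb_bad.
Qed.

Lemma cb_bad_powprod P C L G e m (r : nat -> rat) : cb P (Fb C L G) ->
  (forall t, (t < m)%N -> vge p (-1) (r t)) ->
  cb (P * (\prod_(t < m) ('X + (r t)%:P)) ^+ e) (Fb C (L + e * m) G).
Proof.
move=> hP hr; elim: e => [|e IH]; first by rewrite expr0 mulr1 addn0.
rewrite exprSr mulrA.
have -> : (L + e.+1 * m = (L + e * m) + m)%N by rewrite mulSn; lia.
exact: cb_bad_ord.
Qed.

Lemma cb_const c C : vge p C c -> cb c%:P (Fb C 0 0).
Proof.
move=> hc k; rewrite coefC; case: k => [|k] /=.
  by rewrite /Fb subr0 addr0.
exact: vge0.
Qed.

Lemma cb_weak P f g : cb P f -> (forall k, g k <= f k) -> cb P g.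
Proof. by move=> hP h k; apply: (vge_le pp (h k)). Qed.

End Coef.


Lemma comp_prod (I : Type) (r : seq I) (P : pred I) (F : I -> {poly rat}) q :
  (\prod_(i <- r | P i) F i) \Po q = \prod_(i <- r | P i) (F i \Po q).
Proof.
elim/big_rec2: _ => [|i y1 y2 _ <-]; first by rewrite -polyC1 comp_polyC.
by rewrite comp_polyM.
Qed.

Lemma comp_pow (P q : {poly rat}) e : (P ^+ e) \Po q = (P \Po q) ^+ e.
Proof.
elim: e => [|e IH]; first by rewrite !expr0 -polyC1 comp_polyC.
by rewrite !exprS comp_polyM IH.
Qed.

Lemma comp_lin (c d : rat) : ('X + d%:P) \Po ('X + c%:P) = 'X + (c + d)%:P.
Proof. by rewrite comp_polyD comp_polyX comp_polyC polyCD addrA. Qed.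

Fixpoint build (F : nat -> seq rat -> rat) (k : nat) : seq rat :=
  if k is k'.+1 then rcons (build F k') (F k'.+1 (build F k')) else [:: F 0%N [::]].

Lemma build_size F k : size (build F k) = k.+1.
Proof. by elim: k => //= k IH; rewrite size_rcons IH. Qed.

Lemma build_nth F k i : (i <= k)%N -> (build F k)`_i = (build F i)`_i.
Proof.
elim: k => [|k IH]; first by rewrite leqn0 => /eqP ->.
rewrite leq_eqVlt => /orP [/eqP ->|hk] //.
by rewrite /= nth_rcons build_size hk IH.
Qed.

Lemma build_last F k : (build F k.+1)`_k.+1 = F k.+1 (build F k).
Proof. by rewrite /= nth_rcons build_size ltnn eqxx. Qed.

Lemma vge_prod p (pp : prime p) m (F : nat -> rat) d :
  (forall i, (i < m)%N -> vge p d (F i)) -> vge p (d * m%:Z) (\prod_(i < m) F i).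
Proof.
elim: m => [|m IH] h.
  rewrite big_ord0 mulr0; apply/(vge_pint p); exact: (pint1 pp).
rewrite big_ord_recr /= -(addn1 m) PoszD mulrDr mulr1.
apply: (vgeM pp); last exact: h.
by apply: IH => i hi; apply: h; exact: ltnW.
Qed.

Lemma vge_expr p (pp : prime p) e x d : vge p d x -> vge p (d * e%:Z) (x ^+ e).
Proof.
move=> hx; elim: e => [|e IH].
  rewrite expr0 mulr0; apply/(vge_pint p); exact: (pint1 pp).
rewrite exprSr -(addn1 e) PoszD mulrDr mulr1; exact: (vgeM pp).
Qed.

Section Main.
Variables p s n j : nat.
Hypothesis pp : prime p.
Hypothesis hj : (1 <= j <= p - 1)%N.

Definition cc : rat := j%:R / p%:R.
Definition Cst : rat := ((p ^ (p * n) * n`! ^ s)%N)%:R.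
Definition Cv : nat := (p * n + s * logn p n`!)%N.
Definition Lc : nat := (M0 p s + (p - 2) * n)%N.
Definition Nd : nat := ((p - 1 + s) * n.+1)%N.

Lemma shiftNum_eq : shiftNum p s n j = Cst%:P * ('X + cc%:P) ^+ M0 p s *
  \prod_(1 <= j' < p) \prod_(i < n) ('X + (cc + (j'%:R / p%:R + i%:R))%:P).
Proof.
rewrite /shiftNum /Rnum !comp_polyM comp_polyC comp_Xn_poly comp_prod.
congr (_ * _); apply: eq_bigr => j' _; rewrite comp_prod.
by apply: eq_bigr => i _; rewrite comp_lin.
Qed.

Lemma shiftDen_eq : shiftDen p s n j =
  (\prod_(i < n.+1) ('X + (cc + i%:R)%:P)) ^+ (p - 1 + s).
Proof.
rewrite /shiftDen /Rden comp_pow comp_prod; congr (_ ^+ _).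
by apply: eq_bigr => i _; rewrite comp_lin.
Qed.

Lemma vge_natr (a : nat) M : M <= 0 -> vge p M a%:R.
Proof. move=> hM; apply: (vge_le pp hM); apply/(vge_pint p); exact: (pint_nat pp). Qed.

Lemma vge_pinv : vge p (-1) (p%:R)^-1.
Proof. have := vge_pexpz pp (-1); by rewrite -invr_expz expr1z. Qed.

Lemma vge_frac (a : nat) : vge p (-1) (a%:R / p%:R).
Proof.
have -> : (-1 : int) = 0 + (-1) by [].
apply: (vgeM pp); [by apply: vge_natr | exact: vge_pinv].
Qed.

Lemma vge_bad (a i : nat) : vge p (-1) (cc + (a%:R / p%:R + i%:R)).
Proof.
apply: (vgeD pp); first exact: vge_frac.
apply: (vgeD pp); first exact: vge_frac.
by apply: vge_natr.
Qed.

Lemma p_pos : (0 < p)%N. Proof. exact: prime_gt0. Qed.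

Lemma vge_good (i : nat) : vge p 0 (cc + ((p - j)%:R / p%:R + i%:R)).
Proof.
have hjp : (j <= p)%N by lia.
have -> : cc + ((p - j)%:R / p%:R + i%:R) = (i.+1)%:R.
  rewrite /cc natrB // -natr1.
  have := p_neq0 pp => hp; by field.
by apply: vge_natr.
Qed.

Lemma vge_Cst : vge p Cv Cst.
Proof.
have -> : Cv = logn p (p ^ (p * n) * n`! ^ s).
  rewrite lognM ?expn_gt0 ?p_pos ?fact_gt0 // pfactorK // lognX /Cv; lia.
apply: (vge_nat pp); by rewrite muln_gt0 !expn_gt0 p_pos fact_gt0.
Qed.

Lemma cb_Num : cb p (shiftNum p s n j) (Fb Cv Lc n).
Proof.
have hj1 : (1 <= p - j)%N by lia.
have hj2 : (p - j < p)%N by lia.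
rewrite shiftNum_eq (big_cat_nat hj1 (ltnW hj2)) /= (big_ltn hj2) /=.
set G := fun j' : nat => \prod_(i < n) ('X + (cc + (j'%:R / p%:R + i%:R))%:P).
set A1 := \big[_/_]_(1 <= i < p - j) _.
set A3 := \big[_/_]_((p - j).+1 <= i < p) _.
have -> : Cst%:P * ('X + cc%:P) ^+ M0 p s * (A1 * (G (p - j)%N * A3)) =
   Cst%:P * ('X + cc%:P) ^+ M0 p s * A1 * A3 * G (p - j)%N by ring.
have eL : Lc = (0 + M0 p s + (p - j - 1) * n + (p - (p - j).+1) * n)%N.
  rewrite /Lc add0n -addnA -mulnDl; congr (_ + _ * _); lia.
rewrite eL -[n in Fb _ _ n]add0n.
rewrite /G; apply: (@cb_good_ord p pp _ _ _ _ n (fun t => cc + ((p - j)%:R / p%:R + t%:R))); last by move=> t _; exact: vge_good.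
rewrite /A3; apply: (@cb_bad_nat p pp _ _ _ _ _ _ n (fun i t => cc + (i%:R / p%:R + t%:R))) => //; last by move=> i t _ _; exact: vge_bad.
rewrite /A1; apply: (@cb_bad_nat p pp _ _ _ _ _ _ n (fun i t => cc + (i%:R / p%:R + t%:R))) => //; last by move=> i t _ _; exact: vge_bad.
apply: (cb_bad_pow pp); last by have := vge_bad 0 0; rewrite mul0r !addr0.
exact: (cb_const pp vge_Cst).
Qed.

Lemma cb_Den : cb p (shiftDen p s n j) (Fb 0 Nd 0).
Proof.
rewrite shiftDen_eq -[X in cb _ X _]mul1r -polyC1 /Nd -[X in Fb _ X _]add0n.
apply: (@cb_bad_powprod p pp _ _ _ _ _ n.+1 (fun t => cc + t%:R)); first by apply: (cb_const pp); apply/(vge_pint p); exact: (pint1 pp).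
by move=> t _; have := vge_bad 0 t; rewrite mul0r add0r.
Qed.

Lemma root_eq (i : nat) : (cc + i%:R) * p%:R = (j + p * i)%N%:R.
Proof. rewrite /cc natrD natrM; have := p_neq0 pp => hp; by field. Qed.

Lemma root_num_neq0 (i : nat) : (j + p * i)%N%:R != 0 :> rat.
Proof. rewrite pnatr_eq0; lia. Qed.

Lemma root_neq0 (i : nat) : cc + i%:R != 0.
Proof.
apply: contraNneq (root_num_neq0 i) => h0.
by rewrite -root_eq h0 mul0r.
Qed.

Lemma vge_inv_root (i : nat) : vge p 1 (cc + i%:R)^-1.
Proof.
have hd : ~~ (p %| j + p * i)%N.
  rewrite dvdn_addl ?dvdn_mulr // gtnNdvd //; lia.
have -> : (cc + i%:R)^-1 = p%:R * ((j + p * i)%N%:R)^-1.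
  by rewrite -root_eq invfM mulrCA mulfV ?mulr1 // (p_neq0 pp).
have -> : (1 : int) = 1 + 0 by [].
apply: (vgeM pp).
  by have := vge_pexpz pp 1; rewrite expr1z.
apply/(vge_pint p); exact: (pint_invn hd).
Qed.

Lemma Den0 : (shiftDen p s n j)`_0 = (\prod_(i < n.+1) (cc + i%:R)) ^+ (p - 1 + s).
Proof.
rewrite -horner_coef0 shiftDen_eq horner_exp horner_prod; congr (_ ^+ _).
by apply: eq_bigr => i _; rewrite hornerD hornerX hornerC add0r.
Qed.

Lemma Den0_neq0 : (shiftDen p s n j)`_0 != 0.
Proof.
rewrite Den0 expf_neq0 // prodf_seq_neq0; apply/allP => i _; exact: root_neq0.
Qed.

Lemma vge_D0inv : vge p Nd ((shiftDen p s n j)`_0)^-1.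
Proof.
rewrite Den0 -exprVn -prodfV.
have -> : (Nd : int) = (1 * (n.+1)%:Z) * (p - 1 + s)%:Z by rewrite mul1r -PoszM /Nd mulnC.
apply: (vge_expr pp); apply: (@vge_prod p pp n.+1 (fun i : nat => (cc + i%:R)^-1)) => i _; exact: vge_inv_root.
Qed.

Definition aF (k : nat) (sq : seq rat) : rat :=
  ((shiftNum p s n j)`_k - \sum_(i < k) (shiftDen p s n j)`_(k - i) * sq`_i)
  / (shiftDen p s n j)`_0.

Definition aa (k : nat) : rat := (build aF k)`_k.

Lemma aa_rec k : aa k = ((shiftNum p s n j)`_k -
  \sum_(i < k) (shiftDen p s n j)`_(k - i) * aa i) / (shiftDen p s n j)`_0.
Proof.
case: k => [|k]; first by rewrite /aa /= /aF !big_ord0.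
rewrite /aa build_last /aF; congr ((_ - _) / _); apply: eq_bigr => i _.
by rewrite build_nth // -ltnS.
Qed.

Lemma aa_conv k : \sum_(i < k.+1) (shiftDen p s n j)`_(k - i) * aa i = (shiftNum p s n j)`_k.
Proof.
rewrite big_ord_recr /= subnn [aa k]aa_rec.
have := Den0_neq0 => h0.
set S := \sum_(i < k) _; rewrite mulrCA mulfV // mulr1 addrC subrK //.
Qed.

Definition Ab : int := Cv%:Z - Lc%:Z + Nd%:Z.

Lemma aa_vge k : vge p (Ab + (k - n)%N%:Z) (aa k).
Proof.
elim/ltn_ind: k => k IH.
rewrite aa_rec.
have -> : Ab + (k - n)%N%:Z = (Ab + (k - n)%N%:Z - Nd%:Z) + Nd%:Z by ring.
apply: (vgeM pp); last exact: vge_D0inv.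
apply: (vgeB pp).
  apply: (vge_le pp _ (cb_Num k)); rewrite /Fb /Ab; lia.
apply: (vge_sum pp) => i _.
have := vgeM pp (cb_Den (k - i)%N) (IH i (ltn_ord i)).
apply: (vge_le pp); rewrite /Fb /Ab; have := ltn_ord i; lia.
Qed.

End Main.


Lemma logn_le_trunc p m : prime p -> (0 < m)%N -> (logn p m <= trunc_log p m)%N.
Proof.
move=> pp m0; apply: trunc_log_max; first exact: prime_gt1.
by apply: dvdn_leq => //; exact: pfactor_dvdnn.
Qed.

Lemma logn_bound p n k : prime p ->
  (logn p k.+1 <= trunc_log p n.+1 + (k - n))%N.
Proof.
move=> pp; have p1 := prime_gt1 pp.
apply: (leq_trans (logn_le_trunc pp (ltn0Sn k))).
case: (leqP k n) => hkn.
  have := leq_trunc_log p (hkn : (k.+1 <= n.+1)%N); lia.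
set t := trunc_log p k.+1; set u := trunc_log p n.+1.
have h1 : (p ^ t <= k.+1)%N by apply: trunc_logP.
have h2 : (n.+1 < p ^ u.+1)%N by apply: trunc_log_ltn.
have h3 : (k - n < p ^ (k - n))%N by apply: ltn_expl.
rewrite leqNgt; apply/negP => ht.
have h4 : (p ^ (u.+1 + (k - n)) <= p ^ t)%N by apply: leq_pexp2l; [lia|lia].
rewrite expnD in h4.
have h5 : ((n.+2) * (k - n).+1 <= p ^ u.+1 * p ^ (k - n))%N by apply: leq_mul.
nia.
Qed.

Lemma two_e_le p e : (1 < p)%N -> (2 * e <= p ^ e)%N.
Proof.
move=> p1; elim: e => [|e IH] //.
have := ltn_expl e p1; rewrite expnS; nia.
Qed.

Lemma logn_half p k : prime p -> (2 * logn p k.+1 <= k.+1)%N.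
Proof.
move=> pp; apply: (leq_trans (two_e_le _ (prime_gt1 pp))).
by apply: dvdn_leq => //; exact: pfactor_dvdnn.
Qed.

Lemma pow_bound p k : (4 <= p)%N -> (k.+1 * 2 ^ k <= p ^ k)%N.
Proof.
move=> p4; apply: (@leq_trans (2 ^ k * 2 ^ k)).
  by rewrite leq_mul2r ltn_expl ?orbT.
rewrite -expnMn; case: k => [|k] //; rewrite leq_exp2r //.
Qed.

Theorem lemma6p1 (p s n j : nat) :
  prime p -> (5 <= p)%N -> (0 < s)%N -> ((p + s) ^ 4 < n)%N ->
  (1 <= j <= p - 1)%N ->
  exists a : nat -> rat,
    (forall k : nat,
       \sum_(i < k.+1) (shiftDen p s n j)`_(k - i) * a i = (shiftNum p s n j)`_k) /\
    in_Cdagger p a /\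
    padic_cauchy p (L1_partial a) /\
    exists K : nat, forall m : nat, (K <= m)%N ->
      L1_partial a m = 0 \/ lemma6p1_bound p s n <= vp p (L1_partial a m).
Proof.
move=> pp p5 s0 nbig hj.
set A := Ab p s n.
set a := aa p s n j.
have hterm : forall k, vge p (A + (k - n)%N%:Z - 1 - (logn p k.+1)%:Z)
    (a k * bernoulli k.+1 / (k.+1)%:R).
  move=> k.
  have := vgeM pp (vgeM pp (aa_vge s n pp hj k) (bern_vge pp k.+1)) (vge_invnat pp (ltn0Sn k)).
  apply: (vge_le pp); rewrite /A; lia.
exists a; split; first exact: (aa_conv s n pp hj).
split.
  exists 2; split; first by rewrite ltr1n.
  move=> eps e0.
  set Q := (p%:R : rat) ^ (n%:Z - A).
  have hp0 : (0 : rat) < p%:R by rewrite ltr0n prime_gt0.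
  have Q0 : 0 < Q by apply: exprz_gt0.
  have hb := archi_boundP (ltW (divr_gt0 Q0 e0)).
  exists (maxn n (Num.Def.archi_bound (Q / eps))) => k hk.
  rewrite geq_max in hk; case/andP: hk => hkn hkb.
  have habs := vge_abs pp (aa_vge s n pp hj k).
  have eexp : (p%:R : rat) ^ (- (A + (k - n)%N%:Z)) = Q / (p%:R ^+ k).
    have -> : - (A + (k - n)%N%:Z) = (n%:Z - A) + - (k%:Z) by lia.
    by rewrite expfzDr ?(p_neq0 pp) // -invr_expz -exprnP.
  apply: (le_lt_trans (y := Q / (p%:R ^+ k) * 2 ^+ k)).
    rewrite -eexp; apply: ler_wpM2r => //; exact: exprn_ge0.
  have hk1 : (0 : rat) < (k.+1)%:R by rewrite ltr0n.
  apply: (le_lt_trans (y := Q / (k.+1)%:R)).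
    rewrite -mulrA; apply: ler_wpM2l; first exact: ltW.
    have hpk : (0 : rat) < p%:R ^+ k by exact: exprn_gt0.
    have hpn : ((k.+1 * 2 ^ k)%N%:R : rat) <= (p ^ k)%N%:R.
      by rewrite ler_nat pow_bound //; lia.
    rewrite natrM !natrX in hpn.
    rewrite mulrC ler_pdivrMr // mulrC ler_pdivlMr //.
    by rewrite mulrC.
  rewrite ltr_pdivrMr //.
  have : Q / eps < (k.+1)%:R.
    apply: (lt_le_trans hb); rewrite ler_nat; exact: leqW.
  by rewrite ltr_pdivrMr // mulrC.

split.
  move=> M.
  set K := (2 * n + 2 * `|M - A|%N + 5)%N.
  have hMA : M - A <= (`|M - A|%N)%:Z by rewrite abszE; exact: ler_norm.
  have hv : forall m1 m2, (K <= m2)%N -> (m2 <= m1)%N ->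
      vge p M (L1_partial a m1 - L1_partial a m2).
    move=> m1 m2 hK h21; rewrite /L1_partial.
    rewrite -!(big_mkord xpredT (fun k => a k * bernoulli k.+1 / (k.+1)%:R)).
    rewrite (big_cat_nat (leq0n m2) h21) /= addrC addrK big_nat_cond.
    apply: (vge_sum pp) => k /andP [/andP [hk1 hk2] _].
    apply: (vge_le pp _ (hterm k)).
    have := logn_half k pp; lia.
  exists K => m1 m2 h1 h2.
  case: (eqVneq (L1_partial a m1 - L1_partial a m2) 0) => [/subr0_eq ->|h]; [by left|right].
  apply: (vge_vp pp _ h).
  case: (leqP m2 m1) => hm; first exact: hv.
  rewrite -opprB; apply: (vgeN pp); apply: hv => //; exact: ltnW.

exists 0%N => m _.
case: (eqVneq (L1_partial a m) 0) => [->|h]; [by left|right].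
apply: (vge_vp pp _ h); rewrite /L1_partial; apply: (vge_sum pp) => k _.
apply: (vge_le pp _ (hterm k)).
have := logn_bound n k pp.
rewrite /lemma6p1_bound /A /Ab /Cv /Lc /Nd.
have E : ((p + 1 + s) * n.+1 + (p - 2) * n = (p - 1 + s) * n.+1 + p * n + 2)%N.
  have : (2 <= p)%N by lia.
  nia.
lia.
Qed.
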